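(* The one-dimensional subalgebras of ${\rm S}_1$ are exactly $\langle e_1\rangle$, $\langle e_2\rangle$ and $\langle\alpha e_2+e_3\rangle$ ($\alpha\in\mathbb{C}$). Up to automorphisms of ${\rm S}_1$, every one-dimensional subalgebra is equivalent to $\langle e_1\rangle$ or $\langle e_2\rangle$.
   Context: ${\rm S}_1$ is the complex algebra with basis $e_1,e_2,e_3$ whose only nonzero products of basis elements are $e_1e_i=e_ie_1=e_i$ ($i=1,2,3$), with involution $\overline{e_1}=e_1$, $\overline{e_2}=-e_2$, $\overline{e_3}=-e_3$ (which plays no role here). A subalgebra is a linear subspace closed under multiplication (it need not contain $e_1$). Equivalence up to automorphisms means one is mapped onto the other by an algebra automorphism. $\langle S\rangle$ denotes linear span. *)

(* Defs.v *)
From HB Require Import structures.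
From mathcomp Require Import all_boot all_order all_algebra.
From mathcomp Require Import complex.
From mathcomp Require Import reals.
Set Implicit Arguments. Unset Strict Implicit. Unset Printing Implicit Defensive.
Import Order.TTheory GRing.Theory Num.Theory.
Local Open Scope ring_scope.

(* Elements of S_1 are coordinate rows x = x_1 e_1 + x_2 e_2 + x_3 e_3,
   stored as 'rV[C]_3 with indices 0,1,2 for e_1,e_2,e_3. *)
Definition S1 (R : realType) := 'rV[R[i]]_3.

Definition i0 : 'I_3 := @Ordinal 3 0 isT.
Definition i1 : 'I_3 := @Ordinal 3 1 isT.
Definition i2 : 'I_3 := @Ordinal 3 2 isT.

Definition s1e1 {R : realType} : S1 R := delta_mx 0 i0.
Definition s1e2 {R : realType} : S1 R := delta_mx 0 i1.
Definition s1e3 {R : realType} : S1 R := delta_mx 0 i2.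

(* Bilinear product: only nonzero products of basis elements are
   e1 ei = ei e1 = ei. *)
Definition s1mul {R : realType} (x y : S1 R) : S1 R :=
  \row_j (if j == i0 then x 0 i0 * y 0 i0
          else x 0 i0 * y 0 j + x 0 j * y 0 i0).

Definition is_subalgebra {R : realType} (V : {vspace S1 R}) : Prop :=
  forall x y, x \in V -> y \in V -> s1mul x y \in V.

Definition is_s1_automorphism {R : realType} (f : S1 R -> S1 R) : Prop :=
  [/\ (forall (a : R[i]) (x y : S1 R), f (a *: x + y) = a *: f x + f y),
      bijective f &
      forall x y, f (s1mul x y) = s1mul (f x) (f y)].

Definition maps_onto {R : realType} (f : S1 R -> S1 R) (V W : {vspace S1 R}) : Prop :=
  forall y, y \in W <-> exists2 x, x \in V & f x = y.

(* Main.v *)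
Require Import Defs.
From HB Require Import structures.
From mathcomp Require Import all_boot all_order all_algebra.
From mathcomp Require Import complex.
From mathcomp Require Import reals ring.
Import Order.TTheory GRing.Theory Num.Theory.
Local Open Scope ring_scope.

Section S.
Variable R : realType.
Implicit Types u v x y : S1 R.

Lemma row3P u v : u 0 i0 = v 0 i0 -> u 0 i1 = v 0 i1 -> u 0 i2 = v 0 i2 -> u = v.
Proof.
move=> h0 h1 h2; apply/rowP => j.
case: j => [[|[|[|//]]] Hj].
- by have -> : Ordinal Hj = i0 by apply: val_inj.
- by have -> : Ordinal Hj = i1 by apply: val_inj.
- by have -> : Ordinal Hj = i2 by apply: val_inj.
Qed.

Lemma lineEq u v : u != 0 -> u \in <[v]>%VS -> <[u]>%VS = <[v]>%VS.
Proof.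
move=> nz uv; apply/eqP; rewrite eqEdim -memvE uv /= !dim_vline nz.
by case: (v != 0).
Qed.

Lemma dim1 (V : {vspace S1 R}) : \dim V = 1%N -> exists v, v != 0 /\ V = <[v]>%VS.
Proof.
move=> d; have nz : vpick V != 0.
  by rewrite vpick0 -dimv_eq0 d.
exists (vpick V); split => //; apply/eqP; rewrite eq_sym eqEdim -memvE memv_pick /=.
by rewrite dim_vline nz d.
Qed.

Lemma nz_of v (j : 'I_3) : v 0 j != 0 -> v != 0.
Proof. by move=> h; apply/eqP => e; move: h; rewrite e mxE eqxx. Qed.

Lemma sub_line v : s1mul v v \in <[v]>%VS -> is_subalgebra <[v]>%VS.
Proof.
move=> /vlineP [l hl] x y /vlineP [k ->] /vlineP [k' ->].
apply/vlineP; exists (k * k' * l).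
have -> : s1mul (k *: v) (k' *: v) = (k * k') *: s1mul v v.
  by apply: row3P; rewrite !mxE /=; ring.
by rewrite hl scalerA.
Qed.

Lemma part1 (V : {vspace S1 R}) :
     (\dim V = 1%N /\ is_subalgebra V) <->
     [\/ V = <[s1e1]>%VS, V = <[s1e2]>%VS
       | exists alpha : R[i], V = <[alpha *: s1e2 + s1e3]>%VS].
Proof.
split.
- move=> [/dim1 [x [nz ->]] sub].
  have := sub x x (memv_line x) (memv_line x) => /vlineP [l hl].
  have e0 := congr1 (fun M : S1 R => M 0 i0) hl.
  have e1 := congr1 (fun M : S1 R => M 0 i1) hl.
  have e2 := congr1 (fun M : S1 R => M 0 i2) hl.
  move: e0 e1 e2; rewrite !mxE /= => e0 e1 e2.
  have [a0|anz] := eqVneq (x 0 i0) 0.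
  + have [c0|cnz] := eqVneq (x 0 i2) 0.
    * apply: Or32; apply: lineEq => //; apply/vlineP; exists (x 0 i1).
      by apply: row3P; rewrite !mxE /= ?a0 ?c0; ring.
    * apply: Or33; exists (x 0 i1 / x 0 i2); apply: lineEq => //.
      apply/vlineP; exists (x 0 i2).
      apply: row3P; rewrite !mxE /= ?a0; last by ring.
        by ring.
      by rewrite mulr1 addr0 mulrC divfK.
  + have hl0 : l = x 0 i0.
      by apply: (mulIf anz); rewrite -e0.
    rewrite hl0 in e1 e2.
    have b0 : x 0 i1 = 0.
      have h : x 0 i1 * x 0 i0 = 0.
        by apply: (addrI (x 0 i0 * x 0 i1)); rewrite e1 addr0.
      by move/eqP: h; rewrite mulf_eq0 (negbTE anz) orbF => /eqP.
    have c0 : x 0 i2 = 0.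
      have h : x 0 i2 * x 0 i0 = 0.
        by apply: (addrI (x 0 i0 * x 0 i2)); rewrite e2 addr0.
      by move/eqP: h; rewrite mulf_eq0 (negbTE anz) orbF => /eqP.
    apply: Or31; apply: lineEq => //; apply/vlineP; exists (x 0 i0).
    by apply: row3P; rewrite !mxE /= ?b0 ?c0; ring.
- have key : forall v, v != 0 -> s1mul v v \in <[v]>%VS ->
     \dim <[v]> = 1%N /\ is_subalgebra <[v]>%VS.
    by move=> v nz h; split; [rewrite dim_vline nz | exact: sub_line].
  case=> [->|->|[a ->]]; apply: key.
  + by apply: (@nz_of _ i0); rewrite mxE /= oner_eq0.
  + have -> : s1mul (s1e1 : S1 R) s1e1 = s1e1 by apply: row3P; rewrite !mxE /=; ring.
    exact: memv_line.
  + by apply: (@nz_of _ i1); rewrite mxE /= oner_eq0.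
  + have -> : s1mul (s1e2 : S1 R) s1e2 = 0 *: s1e2 by apply: row3P; rewrite !mxE /=; ring.
    exact: memvZ (memv_line _).
  + by apply: (@nz_of _ i2); rewrite !mxE /= mulr0 add0r oner_eq0.
  + have -> : s1mul (a *: s1e2 + s1e3 : S1 R) (a *: s1e2 + s1e3) = 0 *: (a *: s1e2 + s1e3).
      by apply: row3P; rewrite !mxE /=; ring.
    exact: memvZ (memv_line _).
Qed.

Definition fA (a : R[i]) x : S1 R := \row_j (if j == i0 then x 0 i0
  else if j == i1 then x 0 i2 else x 0 i1 - a * x 0 i2).
Definition gA (a : R[i]) x : S1 R := \row_j (if j == i0 then x 0 i0
  else if j == i1 then x 0 i2 + a * x 0 i1 else x 0 i1).

Lemma fA_auto a : is_s1_automorphism (fA a).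
Proof.
split.
- by move=> k x y; apply: row3P; rewrite !mxE /=; ring.
- exists (gA a) => x; apply: row3P; rewrite !mxE /=; ring.
- by move=> x y; apply: row3P; rewrite !mxE /=; ring.
Qed.

Lemma id_auto : is_s1_automorphism (@id (S1 R)).
Proof. by split => //; exists id. Qed.

End S.

Theorem mainTheorem14 (R : realType) :
  (forall V : {vspace S1 R},
     (\dim V = 1%N /\ is_subalgebra V) <->
     [\/ V = <[s1e1]>%VS, V = <[s1e2]>%VS
       | exists alpha : R[i], V = <[alpha *: s1e2 + s1e3]>%VS]) /\
  (forall V : {vspace S1 R}, \dim V = 1%N -> is_subalgebra V ->
     exists f : S1 R -> S1 R, is_s1_automorphism f /\
       (maps_onto f V <[s1e1]>%VS \/ maps_onto f V <[s1e2]>%VS)).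
Proof.
split; first exact: part1.
move=> V d s; have := (proj1 (@part1 R V)) (conj d s).
case=> [->|->|[a ->]].
- by exists id; split; [exact: (@id_auto R) | left => y; split => [h|[x h <-]]; [exists y|]].
- by exists id; split; [exact: (@id_auto R) | right => y; split => [h|[x h <-]]; [exists y|]].
- exists (@fA R a); split; first exact: fA_auto.
  right => y; split.
  + move=> /vlineP [k ->]; exists (k *: (a *: s1e2 + s1e3)); first exact: memvZ (memv_line _).
    by apply: row3P; rewrite !mxE /=; ring.
  + move=> [x /vlineP [k ->] <-]; apply/vlineP; exists k.
    by apply: row3P; rewrite !mxE /=; ring.
Qed.
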